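(* Let $0<r'<r<1$ and let $K\subseteq\mathbb{R}$ be compact. Then there is $c>0$ such that $K\subseteq\theta_{r'}(\mathbb{Z}((T))_{r,\le c})$, where $\theta_{r'}\big(\sum a_nT^n\big)=\sum a_n(r')^n$.
   Context: $\mathbb{Z}((T))_{r,\le c}$ is the set of integer Laurent series $\sum_{n\gg-\infty}a_nT^n$ ($a_n\in\mathbb{Z}$, $a_n=0$ for $n$ sufficiently negative) with $\sum|a_n|r^n\le c$. *)

(* Defs.v *)
From Stdlib Require Import Reals ZArith Rtopology.
From Coquelicot Require Import Coquelicot.
Open Scope R_scope.

(* An integer Laurent series sum_n a_n T^n is a coefficient function a : Z -> Z
   with a_n = 0 for n sufficiently negative; N is such a lower bound. *)
Definition laurent_bound (a : Z -> Z) (N : Z) : Prop :=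
  forall n : Z, (n < N)%Z -> a n = 0%Z.

Definition is_laurent (a : Z -> Z) : Prop := exists N, laurent_bound a N.

(* a belongs to Z((T))_{r, <= c}: sum_n |a_n| r^n (converges and) is <= c.
   The sum is taken from a lower bound N of the support; the terms below N vanish. *)
Definition in_Zr_le (r c : R) (a : Z -> Z) : Prop :=
  exists N : Z, laurent_bound a N /\
    exists s : R,
      is_series (fun k : nat => Rabs (IZR (a (N + Z.of_nat k)%Z)) * powerRZ r (N + Z.of_nat k)) s
      /\ s <= c.

Definition theta_eq (r' : R) (a : Z -> Z) (x : R) : Prop :=
  exists N : Z, laurent_bound a N /\
    is_series (fun k : nat => IZR (a (N + Z.of_nat k)%Z) * powerRZ r' (N + Z.of_nat k)) x.

(* Main.v *)
Require Import Defs.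
From Stdlib Require Import Reals ZArith Rtopology Lra Lia.
From Coquelicot Require Import Coquelicot.
Open Scope R_scope.

Definition fl (y : R) : Z := (up y - 1)%Z.

Lemma fl_spec y : IZR (fl y) <= y < IZR (fl y) + 1.
Proof. unfold fl; rewrite minus_IZR; destruct (archimed y); lra. Qed.

Lemma fl_nonneg y : 0 <= y -> (0 <= fl y)%Z.
Proof.
  intro H; destruct (fl_spec y).
  assert (-1 < fl y)%Z by (apply lt_IZR; lra). lia.
Qed.

Fixpoint rem (q x : R) (k : nat) : R :=
  match k with
  | O => x
  | S k => rem q x k - IZR (fl (rem q x k / q ^ k)) * q ^ k
  end.

Definition dig q x k := fl (rem q x k / q ^ k).

Lemma rem_S q x k : 0 < q -> 0 <= rem q x (S k) < q ^ k.
Proof.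
  intro Hq. simpl. assert (Hp : 0 < q ^ k) by (apply pow_lt; lra).
  set (y := rem q x k / q ^ k). destruct (fl_spec y).
  replace (rem q x k) with (y * q ^ k) by (unfold y; field; lra).
  split; nra.
Qed.

Lemma rem_nonneg q x k : 0 < q -> 0 <= x -> 0 <= rem q x k.
Proof. intros Hq Hx; destruct k; [exact Hx| apply rem_S; auto]. Qed.

Lemma dig_nonneg q x k : 0 < q -> 0 <= x -> 0 <= IZR (dig q x k).
Proof.
  intros Hq Hx. apply IZR_le, fl_nonneg.
  apply Rmult_le_pos. apply rem_nonneg; auto.
  apply Rlt_le, Rinv_0_lt_compat, pow_lt; lra.
Qed.

Lemma dig_0 q x : IZR (dig q x 0) <= x.
Proof. unfold dig; simpl. destruct (fl_spec (x / 1)). unfold Rdiv in *. lra. Qed.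

Lemma dig_S q x k : 0 < q -> IZR (dig q x (S k)) * q ^ (S k) <= q ^ k.
Proof.
  intro Hq. unfold dig. assert (Hp : 0 < q ^ S k) by (apply pow_lt; lra).
  destruct (rem_S q x k Hq).
  set (y := rem q x (S k) / q ^ S k). destruct (fl_spec y).
  assert (IZR (fl y) * q ^ S k <= rem q x (S k)).
  { replace (rem q x (S k)) with (y * q ^ S k) by (unfold y; field; lra). nra. }
  lra.
Qed.

Lemma psum q x n : 0 < q ->
  sum_n (fun k => IZR (dig q x k) * q ^ k) n = x - rem q x (S n).
Proof.
  intro Hq. induction n.
  - rewrite sum_O. unfold dig. simpl. lra.
  - rewrite sum_Sn, IHn. unfold dig. cbn [rem]. set (A := rem q x n). change plus with Rplus. simpl. lra.
Qed.

Lemma dig_series q x : 0 < q < 1 ->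
  is_series (fun k => IZR (dig q x k) * q ^ k) x.
Proof.
  intro Hq. unfold is_series.
  assert (H : is_lim_seq (sum_n (fun k => IZR (dig q x k) * q ^ k)) x).
  { apply is_lim_seq_ext with (fun n => x - rem q x (S n)).
    { intro n; rewrite psum; lra. }
    replace (Finite x) with (Rbar_minus x 0) by (simpl; f_equal; ring).
    apply is_lim_seq_minus'. apply is_lim_seq_const.
    apply is_lim_seq_le_le with (fun _ => 0) (fun n => q ^ n).
    intro n; destruct (rem_S q x n); lra; lra.
    apply is_lim_seq_const. apply is_lim_seq_geom. rewrite Rabs_pos_eq; lra. }
  exact H.
Qed.

Lemma abs_bound q r y M k : 0 < q -> q < r -> r < 1 -> 0 <= y <= M ->
  Rabs (IZR (dig q y k)) * r ^ k <= (M + / q) * r ^ k.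
Proof.
  intros Hq Hqr Hr Hy.
  rewrite Rabs_pos_eq by (apply dig_nonneg; lra).
  assert (Hrk : 0 < r ^ k) by (apply pow_lt; lra).
  assert (0 < / q) by (apply Rinv_0_lt_compat; lra).
  destruct k.
  - pose proof (dig_0 q y). simpl in *. nra.
  - pose proof (dig_S q y k Hq). pose proof (dig_nonneg q y (S k) Hq (proj1 Hy)).
    assert (IZR (dig q y (S k)) <= / q).
    { assert (Hqk : 0 < q ^ S k) by (apply pow_lt; lra).
      simpl in H0, Hqk. 
      assert (IZR (dig q y (S k)) * q <= 1).
      { apply Rmult_le_reg_r with (q ^ k). apply pow_lt; lra. nra. }
      apply Rmult_le_reg_r with q; auto. rewrite Rinv_l; lra. }
    nra.
Qed.

Theorem mainTheorem14 (r r' : R) (K : R -> Prop) :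
  0 < r' -> r' < r -> r < 1 -> compact K ->
  exists c : R, 0 < c /\
    forall x : R, K x ->
      exists a : Z -> Z, is_laurent a /\ in_Zr_le r c a /\ theta_eq r' a x.
Proof.
  intros Hq Hqr Hr HK.
  destruct (compact_P1 K HK) as [m [M0 HM]].
  set (M := Rabs m + Rabs M0).
  assert (HMb : forall x, K x -> Rabs x <= M).
  { intros x Kx; destruct (HM x Kx). unfold M.
    destruct (Rle_dec 0 x); [rewrite Rabs_pos_eq by lra | rewrite Rabs_left by lra];
    pose proof (Rle_abs M0); pose proof (Rle_abs (-m)); rewrite Rabs_Ropp in *;
    pose proof (Rabs_pos m); pose proof (Rabs_pos M0); lra. }
  assert (HM0 : 0 <= M) by (unfold M; pose proof (Rabs_pos m); pose proof (Rabs_pos M0); lra).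
  assert (Hiq : 0 < / r') by (apply Rinv_0_lt_compat; lra).
  assert (Hgeo : is_series (fun k => (M + / r') * r ^ k) ((M + / r') * / (1 - r))).
  { apply (is_series_scal (M + / r') (fun k => r ^ k)).
    apply is_series_geom. rewrite Rabs_pos_eq; lra. }
  exists ((M + / r') * / (1 - r)). split.
  { apply Rmult_lt_0_compat. lra. apply Rinv_0_lt_compat; lra. }
  intros x Kx.
  set (s := if Rle_dec 0 x then 1%Z else (-1)%Z).
  set (y := Rabs x).
  assert (Hy : 0 <= y <= M) by (split; [apply Rabs_pos | apply HMb; auto]).
  assert (Hsy : IZR s * y = x).
  { unfold s, y; destruct (Rle_dec 0 x);
    [rewrite Rabs_pos_eq by lra | rewrite Rabs_left by lra]; simpl; lra. }
  assert (Habs_s : Rabs (IZR s) = 1).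
  { unfold s; destruct (Rle_dec 0 x); simpl; [apply Rabs_R1 | rewrite Rabs_left; lra]. }
  exists (fun n => if (n <? 0)%Z then 0%Z else (s * dig r' y (Z.to_nat n))%Z).
  assert (Hlb : laurent_bound (fun n => if (n <? 0)%Z then 0%Z else (s * dig r' y (Z.to_nat n))%Z) 0%Z).
  { intros n Hn. destruct (Z.ltb_spec n 0); [reflexivity | lia]. }
  assert (Hval : forall k : nat,
    (if (0 + Z.of_nat k <? 0)%Z then 0%Z else (s * dig r' y (Z.to_nat (0 + Z.of_nat k)))%Z)
    = (s * dig r' y k)%Z).
  { intro k. destruct (Z.ltb_spec (0 + Z.of_nat k) 0); [lia|].
    rewrite Z.add_0_l, Nat2Z.id. reflexivity. }
  split; [exists 0%Z; exact Hlb|]. split.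
  - exists 0%Z. split; [exact Hlb|].
    set (u := fun k : nat => Rabs (IZR (dig r' y k)) * r ^ k).
    assert (Hu : forall k, 0 <= u k <= (M + / r') * r ^ k).
    { intro k; split. unfold u. apply Rmult_le_pos; [apply Rabs_pos| apply pow_le; lra].
      apply abs_bound; lra. }
    assert (Hex : ex_series u).
    { apply (@ex_series_le R_AbsRing R_CompleteNormedModule) with (fun k => (M + / r') * r ^ k).
      intro k. unfold norm; simpl. unfold abs; simpl. rewrite Rabs_pos_eq by apply Hu. apply Hu.
      eexists; exact Hgeo. }
    exists (Series u). split.
    + apply is_series_ext with u; [| apply Series_correct; auto].
      intro k. rewrite Hval, Z.add_0_l, mult_IZR, Rabs_mult, Habs_s, <- pow_powerRZ.
      unfold u; rewrite Rmult_1_l; reflexivity.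
    + rewrite <- (is_series_unique _ _ Hgeo).
      apply Series_le; auto. eexists; exact Hgeo.
  - exists 0%Z. split; [exact Hlb|].
    apply is_series_ext with (fun k => scal (IZR s) (IZR (dig r' y k) * r' ^ k)).
    { intro k. rewrite Hval, Z.add_0_l, mult_IZR, <- pow_powerRZ. unfold scal; simpl.
      unfold mult; simpl. ring. }
    rewrite <- Hsy. apply (@is_series_scal R_AbsRing R_NormedModule (IZR s)). apply dig_series; lra.
Qed.
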